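(* Let $F:\mathbb{R}^n\rightrightarrows\mathbb{R}^n$ be continuous with $F(x)$ nonempty, compact and convex for all $x$, assume $\Sigma:\dot x\in F(x)$ is forward complete, and let $X_o,X_u\subset\mathbb{R}^n$ be such that $\Sigma$ is robustly safe with respect to $(X_o,X_u)$, with robust-safety margin $\bar\epsilon_o$. Then for each continuous $\bar\epsilon:\mathbb{R}^n\to\mathbb{R}_{>0}$ with $\bar\epsilon(x)<\bar\epsilon_o(x)$ for all $x$, the set $K_{\bar\epsilon}$ satisfies: (1) if $\mathrm{cl}(X_o)\cap\mathrm{cl}(X_u)=\emptyset$, then $\mathrm{cl}(X_u)\cap\mathrm{cl}(K_{\bar\epsilon})=\emptyset$; (2) if $\mathrm{cl}(X_o)\cap X_u=\emptyset$, then $X_u\cap\mathrm{cl}(K_{\bar\epsilon})=\emptyset$.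
   Context: $\mathbb{B}$ is the closed unit ball. Continuity of a set-valued map means upper and lower semicontinuity. Solutions of a differential inclusion are locally absolutely continuous functions on an interval containing $0$ satisfying the inclusion a.e.; maximal solutions are non-extendable; $\mathcal{S}_{\Sigma'}(x)$ is the set of maximal solutions of $\Sigma'$ with $\phi(0)=x$. Forward complete: every maximal solution is defined on an interval unbounded to the right. $\Sigma_\epsilon$: $\dot x\in F(x)+\epsilon(x)\mathbb{B}$. $\Sigma'$ is safe with respect to $(X_o,X_u)$ if every solution starting in $X_o$ never enters $X_u$. $\Sigma$ is robustly safe with respect to $(X_o,X_u)$ if there is a continuous $\epsilon:\mathbb{R}^n\to\mathbb{R}_{>0}$ (a robust-safety margin) such that $\Sigma_\epsilon$ is safe with respect to $(X_o,X_u)$. For $t\ge0$, $R_{\Sigma'}(t,x):=\{\phi(s):\phi\in\mathcal{S}_{\Sigma'}(x),\ s\in\mathrm{dom}\,\phi\cap[0,t]\}$, and $K_{\bar\epsilon}:=\bigcup_{t\ge0}\bigcup_{x\in X_o}R_{\Sigma_{\bar\epsilon}}(t,x)$. *)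

(* Defs.v *)
From HB Require Import structures.
From mathcomp Require Import all_boot all_order all_algebra.
From mathcomp Require Import all_classical all_reals all_analysis.
Set Implicit Arguments. Unset Strict Implicit. Unset Printing Implicit Defensive.
Import Order.TTheory GRing.Theory Num.Theory.
Import numFieldNormedType.Exports.
Local Open Scope classical_set_scope.
Local Open Scope ring_scope.

Section Defs.
Variables (R : realType) (n : nat).
Notation V := 'rV[R]_n.

Definition enorm (v : V) : R := Num.sqrt (\sum_(i < n) v ord0 i ^+ 2).
Definition unit_ball : set V := [set v | enorm v <= 1].

Definition usc_at (F : V -> set V) (x : V) : Prop :=
  forall U : set V, open U -> F x `<=` U ->
    \forall y \near x, F y `<=` U.
Definition lsc_at (F : V -> set V) (x : V) : Prop :=
  forall U : set V, open U -> F x `&` U !=set0 ->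
    \forall y \near x, F y `&` U !=set0.
Definition sv_continuous (F : V -> set V) : Prop :=
  forall x, usc_at F x /\ lsc_at F x.

Definition inflate (F : V -> set V) (eps : V -> R) : V -> set V :=
  fun x => [set f + eps x *: b | f in F x & b in unit_ball].

Definition abs_cont_on (phi : R -> V) (a b : R) : Prop :=
  forall e : R, 0 < e -> exists2 d : R, 0 < d &
    forall (k : nat) (u w : nat -> R),
      (forall i, (i < k)%N -> a <= u i /\ u i <= w i /\ w i <= b) ->
      (forall i j, (i < k)%N -> (j < k)%N -> i <> j -> w i <= u j \/ w j <= u i) ->
      \sum_(i < k) (w i - u i) < d ->
      \sum_(i < k) enorm (phi (w i) - phi (u i)) < e.

Definition loc_abs_cont (I : set R) (phi : R -> V) : Prop :=
  forall a b, a <= b -> `[a, b] `<=` I -> abs_cont_on phi a b.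

Definition is_solution (G : V -> set V) (I : set R) (phi : R -> V) : Prop :=
  [/\ is_interval I, I 0, loc_abs_cont I phi &
      exists N : set R, (@lebesgue_measure R).-negligible N /\
        forall t, I t -> ~ N t -> derivable phi t 1 /\ G (phi t) ('D_1 phi t)].

Definition is_max_solution (G : V -> set V) (I : set R) (phi : R -> V) : Prop :=
  is_solution G I phi /\
  forall (J : set R) (psi : R -> V), is_solution G J psi -> I `<=` J ->
    (forall t, I t -> psi t = phi t) -> J = I.

Definition forward_complete (G : V -> set V) : Prop :=
  forall I phi, is_max_solution G I phi -> forall M : R, exists2 t, I t & M < t.

Definition safe (G : V -> set V) (Xo Xu : set V) : Prop :=
  forall I phi, is_solution G I phi -> Xo (phi 0) ->
    forall t, I t -> 0 <= t -> ~ Xu (phi t).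

Definition pos_cont (eps : V -> R) : Prop :=
  continuous eps /\ forall x, 0 < eps x.

Definition margin (F : V -> set V) (Xo Xu : set V) (eps : V -> R) : Prop :=
  pos_cont eps /\ safe (inflate F eps) Xo Xu.

Definition reach (G : V -> set V) (t : R) (x : V) : set V :=
  [set y | exists I phi s, [/\ is_max_solution G I phi, phi 0 = x,
                             I s, 0 <= s <= t & y = phi s]].

Definition Kset (F : V -> set V) (eps : V -> R) (Xo : set V) : set V :=
  \bigcup_(t in [set t : R | 0 <= t]) \bigcup_(x in Xo) reach (inflate F eps) t x.

End Defs.

(* Main.v *)
Require Import Defs.
From HB Require Import structures.
From mathcomp Require Import all_boot all_order all_algebra.
From mathcomp Require Import all_classical all_reals all_analysis.
From mathcomp Require Import ring lra.
Import Order.TTheory GRing.Theory Num.Theory.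
Import numFieldNormedType.Exports.
Local Open Scope classical_set_scope.
Local Open Scope ring_scope.
Set Implicit Arguments. Unset Strict Implicit. Unset Printing Implicit Defensive.
Section E.
Variables (R : realType) (n : nat).
Notation V := 'rV[R]_n.
Implicit Types (u v : V).

Lemma sumsq_ge0 v : 0 <= \sum_(i < n) v ord0 i ^+ 2.
Proof. by apply: sumr_ge0 => i _; exact: sqr_ge0. Qed.

Lemma enorm_ge0 v : 0 <= enorm v.
Proof. exact: sqrtr_ge0. Qed.

Lemma enorm_sq v : enorm v ^+ 2 = \sum_(i < n) v ord0 i ^+ 2.
Proof. by rewrite /enorm sqr_sqrtr // sumsq_ge0. Qed.

Lemma enorm_coord v i : `|v ord0 i| <= enorm v.
Proof.
rewrite /enorm -sqrtr_sqr ler_sqrt ?sumsq_ge0 //.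
rewrite (bigD1 i) //= lerDl; apply: sumr_ge0 => j _; exact: sqr_ge0.
Qed.

Lemma enormZ (a : R) v : enorm (a *: v) = `|a| * enorm v.
Proof.
rewrite /enorm (eq_bigr (fun i => a ^+ 2 * v ord0 i ^+ 2)); last first.
  by move=> i _; rewrite mxE exprMn.
by rewrite -mulr_sumr sqrtrM ?sqr_ge0 // sqrtr_sqr.
Qed.

Lemma enormN v : enorm (- v) = enorm v.
Proof. by rewrite -scaleN1r enormZ normrN1 mul1r. Qed.

Lemma CS (a b : 'I_n -> R) :
  (\sum_i a i * b i) ^+ 2 <= (\sum_i a i ^+ 2) * (\sum_i b i ^+ 2).
Proof.
set A := \sum_i a i ^+ 2; set B := \sum_i b i ^+ 2; set S := \sum_i a i * b i.
have B0 : 0 <= B by apply: sumr_ge0 => i _; exact: sqr_ge0.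
have A0 : 0 <= A by apply: sumr_ge0 => i _; exact: sqr_ge0.
have key t : 0 <= A + 2 * t * S + t ^+ 2 * B.
  have -> : A + 2 * t * S + t ^+ 2 * B = \sum_i (a i + t * b i) ^+ 2.
    rewrite /A /S /B mulr_sumr mulr_sumr -!big_split /=.
    by apply: eq_bigr => i _; rewrite sqrrD exprMn; lra.
  by apply: sumr_ge0 => i _; exact: sqr_ge0.
have [B00|Bpos] := eqVneq B 0.
  have: S = 0.
    apply/eqP/negPn/negP => S0.
    have := key (- (A + 1) / (2 * S)); rewrite B00 mulr0 addr0.
    have -> : A + 2 * (- (A + 1) / (2 * S)) * S = -1 by field.
    by rewrite lerNr oppr0 ler10.
  by move=> ->; rewrite expr0n /= mulr_ge0.
have Bp : 0 < B by rewrite lt_def Bpos B0.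
have := key (- S / B).
have -> : A + 2 * (- S / B) * S + (- S / B) ^+ 2 * B = A - S ^+ 2 / B.
  by field; rewrite Bpos.
rewrite subr_ge0 ler_pdivrMr // mulrC.

Qed.

Lemma enormD u v : enorm (u + v) <= enorm u + enorm v.
Proof.
rewrite -(@ler_pXn2r _ 2) ?nnegrE ?addr_ge0 ?enorm_ge0 //.
rewrite enorm_sq sqrrD !enorm_sq.
have -> : \sum_i (u + v) ord0 i ^+ 2 =
  \sum_i u ord0 i ^+ 2 + 2 * \sum_i u ord0 i * v ord0 i + \sum_i v ord0 i ^+ 2.
  rewrite mulr_sumr -!big_split /=; apply: eq_bigr => i _; rewrite mxE sqrrD; lra.
rewrite lerD2r -mulr_natr lerD2l mul1r mulrC -[X in _ <= X]mulr_natr ler_pM2r //.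

have := CS (fun i => u ord0 i) (fun i => v ord0 i).
rewrite -!enorm_sq -exprMn => h.
apply: le_trans (ler_norm _) _.
rewrite -(@ler_pXn2r _ 2) ?nnegrE ?mulr_ge0 ?enorm_ge0 //.
by rewrite real_normK // num_real.
Qed.

Lemma enormB u v : enorm (u - v) = enorm (v - u).
Proof. by rewrite -enormN opprB. Qed.

Lemma coord_le_norm v i : `|v ord0 i| <= `|v|.
Proof.
have /mapP[j Hj ->] : `|v ord0 i| \in [seq `|v x.1 x.2| | x : 'I_1 * 'I_n].
  by apply/mapP; exists (ord0, i) => //=; rewrite mem_enum.
by rewrite [leRHS]/Num.norm /= mx_normrE; apply/bigmax_geP; right => /=; exists j.
Qed.

Lemma enorm_le_norm v : enorm v <= n%:R * `|v|.
Proof.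
rewrite -(@ler_pXn2r _ 2) ?nnegrE ?mulr_ge0 ?enorm_ge0 //.
rewrite enorm_sq exprMn.
apply: (@le_trans _ _ (\sum_(i < n) `|v|^+2)).
  apply: ler_sum => i _; rewrite -real_normK ?num_real //.
  by rewrite lerXn2r ?nnegrE ?coord_le_norm.
rewrite sumr_const card_ord.
have h (k : nat) (x : R) : 0 <= x -> k%:R * x <= k%:R ^+ 2 * x.
  move=> x0; apply: ler_wpM2r => //.
  by case: k => [|k]; [rewrite expr0n | rewrite ler_eXnr // ler1n].
have := h n (`|v| ^+ 2) (sqr_ge0 _); by rewrite mulr_natl.
Qed.

Lemma norm_le_enorm v : `|v| <= enorm v.
Proof.
rewrite [leLHS]/Num.norm /= mx_normrE; apply/bigmax_leP; split; first exact: enorm_ge0.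
move=> [i j] _ /=; rewrite (ord1 i); exact: enorm_coord.
Qed.

End E.
Section RI.
Variable (R : realType).

Definition famin (U : set R) (a t : R) k (u w : nat -> R) :=
 [/\ (forall i, (i < k)%N -> a <= u i /\ u i <= w i /\ w i <= t),
     (forall i, (i < k)%N -> forall x, u i <= x -> x <= w i -> U x) &
     (forall i j, (i < k)%N -> (j < k)%N -> i <> j -> w i <= u j \/ w j <= u i)].

Lemma famin_mono U a t t' k u w : t <= t' -> famin U a t k u w -> famin U a t' k u w.
Proof.
move=> tt' [h1 h2 h3]; split => // i ik; have [? [? ?]] := h1 i ik.
by split => //; split => //; apply: le_trans tt'.
Qed.

Definition Pfam (f : R -> R) U a K t :=
  exists k u w, famin U a t k u w /\
    f t - f a <= K * (t - a) + \sum_(i < k) (f (w i) - f (u i)).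

Lemma Pfam_slope f U a K t t' : t <= t' -> f t' - f t <= K * (t' - t) ->
  Pfam f U a K t -> Pfam f U a K t'.
Proof.
move=> tt' sl [k [u [w [fm ineq]]]]; exists k, u, w; split.
  exact: famin_mono fm.
have -> : f t' - f a = (f t' - f t) + (f t - f a) by ring.
have -> : K * (t' - a) = K * (t' - t) + K * (t - a) by ring.
have := lerD sl ineq; lra.

Qed.

Lemma Pfam_ext f U a K t t' : 0 <= K -> a <= t -> t <= t' ->
  (forall x, t <= x -> x <= t' -> U x) ->
  Pfam f U a K t -> Pfam f U a K t'.
Proof.
move=> K0 at_ tt' Ut [k [u [w [[h1 h2 h3] ineq]]]].
pose u' i := if i == k then t else u i.
pose w' i := if i == k then t' else w i.
exists k.+1, u', w'; split.
  split.
  - move=> i; rewrite ltnS leq_eqVlt => /orP[/eqP ->|ik].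
      by rewrite /u' /w' eqxx.
    rewrite /u' /w' (ltn_eqF ik); have [? [? ?]] := h1 i ik.
    by split => //; split => //; apply: le_trans tt'.
  - move=> i; rewrite ltnS leq_eqVlt => /orP[/eqP ->|ik].
      by rewrite /u' /w' eqxx; exact: Ut.
    by rewrite /u' /w' (ltn_eqF ik); exact: h2.
  - move=> i j ik jk ij; rewrite /u' /w'.
    have [iek|ink] := eqVneq i k; have [jek|jnk] := eqVneq j k.
    + by exfalso; apply: ij; rewrite iek jek.
    + have jk' : (j < k)%N by rewrite ltn_neqAle jnk -ltnS.
      by right; have [_ [_ ?]] := h1 j jk'.
    + have ik' : (i < k)%N by rewrite ltn_neqAle ink -ltnS.
      by left; have [_ [_ ?]] := h1 i ik'.
    + have jk' : (j < k)%N by rewrite ltn_neqAle jnk -ltnS.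
      have ik' : (i < k)%N by rewrite ltn_neqAle ink -ltnS.
      exact: h3.
rewrite big_ord_recr /= /u' /w' eqxx.
rewrite (eq_bigr (fun i : 'I_k => f (w i) - f (u i))); last first.
  by move=> i _; rewrite (ltn_eqF (ltn_ord i)).
have -> : f t' - f a = (f t' - f t) + (f t - f a) by ring.
have : K * (t - a) <= K * (t' - a) by rewrite ler_wpM2l // lerD2r.
lra.
Qed.

Lemma RI (f : R -> R) a b K (U : set R) e :
 a <= b -> 0 <= K -> open U ->
 (forall k u w, famin U a b k u w -> \sum_(i < k) (f (w i) - f (u i)) <= e) ->
 (forall c, a <= c -> c <= b -> ~ U c -> exists2 eta, 0 < eta &
    forall t, a <= t -> t <= b -> `|t - c| < eta ->
      (t <= c -> f c - f t <= K * (c - t)) /\ (c <= t -> f t - f c <= K * (t - c))) ->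
 f b - f a <= K * (b - a) + e.
Proof.
move=> ab K0 oU HU Hd.
pose S := [set t | (a <= t /\ t <= b) /\ Pfam f U a K t].
have Sa : S a.
  split; first by split.
  exists 0%N, (fun=> 0), (fun=> 0); split; first by split.
  by rewrite big_ord0 !subrr mulr0 addr0.
have hs : has_sup S by split; [exists a | exists b => t [[_ ?] _]].
set c := sup S.
have ac : a <= c by exact: sup_upper_bound hs _ Sa.
have cb : c <= b by apply: ge_sup; [exists a | move=> t [[_ ?] _]].
have adh eta : 0 < eta -> exists2 t, S t & c - eta < t /\ t <= c.
  move=> eta0; have [t St ht] := sup_adherent eta0 hs.
  by exists t => //; split => //; exact: sup_upper_bound hs _ St.
suff [Sc ext] : S c /\ (c < b -> exists2 t', S t' & c < t').
  have cbe : c = b.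
    apply/eqP; rewrite eq_le cb /=; rewrite leNgt; apply/negP => /ext [t' St'].
    by apply/negP; rewrite -leNgt; exact: sup_upper_bound hs _ St'.
  move: Sc; rewrite cbe => -[_ [k [u [w [fm ineq]]]]].
  by apply: le_trans ineq _; rewrite lerD2l; exact: HU.
have [Uc|nUc] := pselect (U c).
  have := oU c Uc; move=> /nbhs_ballP [eta /= eta0 Hball].
  have [t [[at_ tb] Pt] [ht tc]] := adh eta eta0.
  have Uint x : t <= x -> x < c + eta -> U x.
    move=> tx xc; apply: Hball; rewrite /ball /= ltr_norml; apply/andP; split; lra.
  split.
    split; first by split.
    apply: Pfam_ext Pt => // x tx xc; apply: Uint => //; lra.
  move=> cb'.
  pose t' := Num.min b (c + eta / 2).
  have ct' : c < t' by rewrite /t' lt_min cb' /=; lra.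
  exists t' => //; split.
    split; last by rewrite ge_min lexx.
    by apply: le_trans (ltW ct').
  apply: Pfam_ext Pt => // [|x tx xt']; first by apply: le_trans (ltW ct'); lra.
  apply: Uint => //; apply: le_lt_trans xt' _; rewrite /t' gt_min; apply/orP; right; lra.
have [eta eta0 Hl] := Hd c ac cb nUc.
have [t [[at_ tb] Pt] [ht tc]] := adh eta eta0.
have h1 : `|t - c| < eta.
  rewrite ler0_norm; last by rewrite subr_le0.
  by rewrite opprB ltrBlDr addrC -ltrBlDr.
have Pc : Pfam f U a K c.
  apply: (Pfam_slope tc) Pt.
  exact: (Hl t at_ tb h1).1 tc.
split; first by split.
move=> cb'.
pose t' := Num.min b (c + eta / 2).
have ct' : c < t' by rewrite /t' lt_min cb' /=; lra.
have t'b : t' <= b by rewrite ge_min lexx.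
have t'c : t' <= c + eta / 2 by rewrite ge_min lexx orbT.
exists t' => //; split; first by split => //; apply: le_trans (ltW ct').
apply: Pfam_slope (ltW ct') _ Pc.
have h2 : `|t' - c| < eta.
  rewrite gtr0_norm; last by rewrite subr_gt0.
  by rewrite ltrBlDl; apply: le_lt_trans t'c _; rewrite ltrD2l; lra.
exact: (Hl t' (le_trans ac (ltW ct')) t'b h2).2 (ltW ct').
Qed.

End RI.
Section L.
Variables (R : realType) (n : nat).
Notation V := 'rV[R]_n.

Lemma deriv_local (phi : R -> V) t (M : R) : derivable phi t 1 ->
  `|'D_1 phi t| <= M -> forall e : R, 0 < e -> exists2 eta : R, 0 < eta &
  forall t', `|t' - t| < eta -> `|phi t' - phi t| <= (M + e) * `|t' - t|.
Proof.
move=> dphi DM e e0.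
have := dphi; rewrite /derivable => /cvgrPdist_lt /(_ e e0).
move=> /nbhs_ballP [eta /= eta0 Heta].
exists eta => // t' htt'.
have [->|neq] := eqVneq t' t; first by rewrite !subrr normr0 normr0 mulr0.
have h0 : t' - t != 0 by rewrite subr_eq0.
have := Heta (t' - t); rewrite /ball /= sub0r normrN => /(_ htt' h0).
rewrite /= scaler1 subrK => hlt.
have -> : phi t' - phi t = (t' - t) *: ((t' - t)^-1 *: (phi t' - phi t)).
  by rewrite scalerA divff // scale1r.
rewrite normrZ mulrC ler_wpM2r //.
rewrite -[X in `|X|](subrK ('D_1 phi t)).
apply: le_trans (ler_normD _ _) _.
rewrite addrC lerD // ltW // -normrN opprB.
by move: hlt; rewrite /derive.
Qed.

End L.
Section M.
Variables (R : realType) (n : nat).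
Notation V := 'rV[R]_n.
Local Notation mu := (@lebesgue_measure R).

Lemma famlen (U : set R) a b k u w d : open U -> (mu U < d%:E)%E -> famin U a b k u w ->
  \sum_(i < k) (w i - u i) < d.
Proof.
move=> oU Ud [h1 h2 h3].
pose F i := [set` Interval (BRight (u i)) (BLeft (w i))].
have mF i : measurable (F i) by exact: measurable_itv.
have tF : trivIset `I_k F.
  move=> i j /= ik jk [x [Fi Fj]]; apply/eqP/negPn/negP => /eqP ij.
  move: Fi Fj; rewrite /F /= !in_itv /= => /andP[ux xw] /andP[ux' xw'].
  have [l|l] := h3 i j ik jk ij.
    by have := lt_trans xw (le_lt_trans l ux'); rewrite ltxx.
  by have := lt_trans xw' (le_lt_trans l ux); rewrite ltxx.
have sub : \big[setU/set0]_(i < k) F i `<=` U.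
  move=> x /=; rewrite -bigcup_mkord => -[i /= ik]; rewrite /F /= in_itv /= => /andP[ux xw].
  by apply: h2 ik x (ltW ux) (ltW xw).
have mU : measurable (\big[setU/set0]_(i < k) F i).
  by apply: bigsetU_measurable => i _.
have := measure_semi_additive_ord_I mu (fun i _ => mF i) tF mU.
have -> : \sum_(i < k) mu (F i) = (\sum_(i < k) (w i - u i))%:E.
  rewrite -sumEFin; apply: eq_bigr => i _; rewrite lebesgue_measure_itv /=.
  rewrite lte_fin; case: ltP => // wu.
  have [_ [uw _]] := h1 i (ltn_ord i).
  have -> : w i = u i by apply/eqP; rewrite eq_le uw wu.
  by rewrite subrr.
move=> eq; rewrite -lte_fin -eq; apply: le_lt_trans Ud.
by apply: le_measure => //; rewrite inE //; exact: measurable_realfun.open_measurable.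
Qed.
End M.
Section Lip.
Variables (R : realType) (n : nat).
Notation V := 'rV[R]_n.
Local Notation mu := (@lebesgue_measure R).

Lemma norm_le_coords (v : V) r : 0 <= r -> (forall j, `|v ord0 j| <= r) -> `|v| <= r.
Proof.
move=> r0 h; rewrite [leLHS]/Num.norm /= mx_normrE; apply/bigmax_leP; split => //.
by move=> [i j] _ /=; rewrite (ord1 i).
Qed.

Lemma sgn_coord (x y : V) (s : R) j : `|s| = 1 ->
  s * (x ord0 j - y ord0 j) <= `|x - y|.
Proof.
move=> s1; apply: le_trans (ler_norm _) _; rewrite normrM s1 mul1r.
have := coord_le_norm (x - y) j; by rewrite !mxE.
Qed.

Lemma sgn_coord_e (x y : V) (s : R) j : `|s| = 1 ->
  s * (x ord0 j - y ord0 j) <= enorm (x - y).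
Proof.
move=> s1; apply: le_trans (ler_norm _) _; rewrite normrM s1 mul1r.
have := enorm_coord (x - y) j; by rewrite !mxE.
Qed.

Lemma negl_open (N : set R) d : mu.-negligible N -> 0 < d ->
  exists U, [/\ open U, N `<=` U & (mu U < d%:E)%E].
Proof.
move=> [A [mA A0 NA]] d0.
have Afin : (mu A < +oo)%E by rewrite A0 ltry.
have [U [oU AU UA]] := lebesgue_regularity_outer mA Afin d0.
exists U; split => //; first exact: subset_trans AU.
have mU : measurable U by exact: measurable_realfun.open_measurable.
have mUA : measurable (U `\` A) by exact: measurableD.
rewrite -(setDUK AU) measureU //; last exact: setDIK.
by change (mu A + mu (U `\` A) < d%:E)%E; rewrite A0 add0e.
Qed.

Lemma lip (phi : R -> V) a b M N :
 a <= b -> 0 <= M -> mu.-negligible N -> abs_cont_on phi a b ->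
 (forall t, a <= t -> t <= b -> ~ N t -> derivable phi t 1 /\ `|'D_1 phi t| <= M) ->
 `|phi b - phi a| <= M * (b - a).
Proof.
move=> ab M0 negN ac hd.
suff key : forall (s : R) j, `|s| = 1 ->
    s * (phi b ord0 j - phi a ord0 j) <= M * (b - a).
  apply: norm_le_coords; first by rewrite mulr_ge0 // subr_ge0.
  move=> j; rewrite !mxE ler_norml; apply/andP; split.
  - rewrite lerNl -mulN1r; apply: key; by rewrite normrN normr1.
  - by rewrite -[X in X <= _]mul1r; apply: key; rewrite normr1.
move=> s j s1.
apply/ler_addgt0Pr => e e0.
pose f t := s * phi t ord0 j.
have e20 : 0 < e / 2 by rewrite divr_gt0.
have [d d0 hac] := ac (e / 2) e20.
have [U [oU NU Ud]] := negl_open negN d0.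
pose e' := e / 2 / (b - a + 1).
have ba1 : 0 < b - a + 1 by rewrite ltr_wpDl // subr_ge0.
have e'0 : 0 < e' by rewrite divr_gt0.
have e'ba : e' * (b - a) <= e / 2.
  rewrite /e' mulrAC ler_pdivrMr // ler_pM2l //; lra.
have HU : forall k u w, famin U a b k u w -> \sum_(i < k) (f (w i) - f (u i)) <= e / 2.
  move=> k u w fm; have := fm => -[h1 h2 h3].
  apply: le_trans (ltW (hac k u w h1 h3 (famlen oU Ud fm))).
  apply: ler_sum => i _; rewrite /f -mulrBr; exact: sgn_coord_e.
have Hd : forall c, a <= c -> c <= b -> ~ U c -> exists2 eta, 0 < eta &
    forall t, a <= t -> t <= b -> `|t - c| < eta ->
      (t <= c -> f c - f t <= (M + e') * (c - t)) /\
      (c <= t -> f t - f c <= (M + e') * (t - c)).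
  move=> c ac' cb nUc.
  have [dc Dc] := hd c ac' cb (fun Nc => nUc (NU c Nc)).
  have [eta eta0 Heta] := deriv_local dc Dc e'0.
  exists eta => // t _ _ tc; have := Heta t tc => h.
  split => ht.
  - rewrite /f -mulrBr; apply: le_trans (sgn_coord _ _ _ s1) _.
    by rewrite distrC; apply: le_trans h _; rewrite distrC ger0_norm ?subr_ge0.
  - rewrite /f -mulrBr; apply: le_trans (sgn_coord _ _ _ s1) _.
    by apply: le_trans h _; rewrite ger0_norm ?subr_ge0.
have := RI ab (addr_ge0 M0 (ltW e'0)) oU HU Hd.
rewrite /f -mulrBr => h; apply: le_trans h _.
rewrite mulrDl -addrA lerD2l; lra.
Qed.
End Lip.
Section SV.
Variables (R : realType) (n : nat).
Notation V := 'rV[R]_n.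

Lemma near_all_seq (T : Type) (A : eqType) (F : set_system T) (FF : Filter F)
  (s : seq A) (P : A -> T -> Prop) :
  (forall a, a \in s -> F (P a)) -> F (fun x => forall a, a \in s -> P a x).
Proof.
elim: s => [|a s IH] H; first by apply: filterE => x a; rewrite in_nil.
have Ha : F (P a) by apply: H; rewrite mem_head.
have Hs : F (fun x => forall b, b \in s -> P b x).
  by apply: IH => b bs; apply: H; rewrite in_cons bs orbT.
apply: filterS2 Ha Hs => x Pa Ps b; rewrite in_cons => /orP[/eqP ->//|bs].
exact: Ps.
Qed.

Lemma ballV (y x : V) r : ball y r x <-> `|y - x| < r.
Proof. by rewrite -ball_normE. Qed.

Lemma usc_unif (F : V -> set V) y (g : R) : usc_at F y -> 0 < g ->
  \forall x \near y, forall f, F x f -> exists2 g0, F y g0 & `|g0 - f| < g.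
Proof.
move=> usc g0.
pose U := [set f : V | exists2 h, F y h & `|h - f| < g].
have oU : open U.
  rewrite openE => f [h Fh hf]; apply/nbhs_ballP.
  have gp : 0 < g - `|h - f| by rewrite subr_gt0.
  exists (g - `|h - f|) => //.
  move=> f' /ballV bf; exists h => //.
  apply: le_lt_trans (ler_distD f _ _) _; rewrite addrC -ltrBrDr; done.
have sub : F y `<=` U by move=> f Ff; exists f => //; rewrite subrr normr0.
exact: usc U oU sub.
Qed.

Lemma lsc_unif (F : V -> set V) y (g : R) : compact (F y) -> lsc_at F y -> 0 < g ->
  \forall x \near y, forall g0, F y g0 -> exists2 f, F x f & `|g0 - f| < g.
Proof.
move=> cF lsc g0.
have g20 : 0 < g / 2 by rewrite divr_gt0.
have := cF; rewrite compact_cover => /(_ V (F y) (fun a => ball a (g / 2))).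
case.
- by move=> i _; exact: ball_open.
- by move=> a Fa; exists a => //; exact: ballxx.
move=> D' D'sub cov.
have H : \forall x \near y, forall a : V, a \in finmap.enum_fset D' -> F x `&` ball a (g / 2) !=set0.
  apply: near_all_seq => a aD.
  apply: lsc; first exact: ball_open.
  exists a; split; last exact: ballxx.
  by have := D'sub a aD; rewrite in_setE.
apply: filterS H => x H g1 Fg1.
have [a /= aD bag1] := cov g1 Fg1.
have [f [Ff /ballV baf]] := H a (aD : a \in finmap.enum_fset D').
exists f => //; move/ballV: bag1 => bag1.
apply: le_lt_trans (ler_distD a g1 f) _.
rewrite distrC; apply: lt_le_trans (ltrD bag1 baf) _; lra.
Qed.

Lemma bound_near (F : V -> set V) y : compact (F y) -> usc_at F y ->
  exists2 B : R, 0 < B & \forall x \near y, forall f, F x f -> `|f| < B.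
Proof.
move=> cF usc.
have [M [Mreal HM]] := compact_bounded cF.
have hb : F y `<=` [set v | `|v| <= `|M| + 1].
  apply: HM; apply: le_lt_trans (real_ler_norm Mreal) _; lra.
have B0 : 0 < `|M| + 2 by apply: le_lt_trans (normr_ge0 M) _; lra.
exists (`|M| + 2) => //.
have sub : F y `<=` ball 0 (`|M| + 2).
  by move=> f Ff; apply/ballV; rewrite sub0r normrN; have := hb f Ff; rewrite /=; lra.
apply: filterS (usc _ (ball_open _ _) sub) => x H f Ff.
by have := H f Ff; rewrite /= ballV sub0r normrN.
Qed.

End SV.
Section Pert.
Variables (R : realType) (n : nat).
Notation V := 'rV[R]_n.

Lemma is_derive_affine (g : R -> V) t w : (forall h, g (h + t) - g t = h *: w) ->
  is_derive t 1 g w.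
Proof.
move=> H.
have H' : \forall h \near 0^', w = h^-1 *: ((g \o shift t) (h *: 1) - g t).
  near=> h.
  have h0 : h != 0 by near: h; exact: nbhs_dnbhs_neq.
  by rewrite /= scaler1 H scalerA mulVf // scale1r.
have cv : (fun h : R => h^-1 *: ((g \o shift t) (h *: 1) - g t)) @ 0^' --> w.
  exact: cvg_trans (near_eq_cvg H') (cvg_cst w).
apply: DeriveDef; first by apply/cvg_ex; exists w.
by apply: norm_cvg_lim cv.
Unshelve. all: by end_near.
Qed.

Lemma deriv_pert (phi : R -> V) (v : V) (r : R -> R) t (al be : R) :
  derivable phi t 1 -> (\forall t' \near t, r t' = al * t' + be) ->
  derivable (fun t => phi t + r t *: v) t 1 /\
  'D_1 (fun t => phi t + r t *: v) t = 'D_1 phi t + al *: v.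
Proof.
move=> dphi hr.
have hg : is_derive t 1 (fun t' => (al * t' + be) *: v) (al *: v).
  apply: is_derive_affine => h.
  by rewrite -scalerBl scalerA; congr (_ *: _); ring.
have hp : is_derive t 1 phi ('D_1 phi t) by apply: DeriveDef.
have hs := is_deriveD hp hg.
have hn : \near t, (phi + (fun t' => (al * t' + be) *: v)) t = phi t + r t *: v.
  by apply: filterS hr => x ->.
have := near_eq_is_derive hn hs => -[d1 d2]; split => //.
Qed.

Lemma ac_pert (phi : R -> V) (r : R -> R) (v : V) a b L : 0 <= L ->
  abs_cont_on phi a b -> (forall x y, x <= y -> `|r y - r x| <= L * (y - x)) ->
  abs_cont_on (fun t => phi t + r t *: v) a b.
Proof.
move=> L0 ac Lr e e0.
have e20 : 0 < e / 2 by rewrite divr_gt0.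
have [d1 d10 H1] := ac (e / 2) e20.
pose K := L * enorm v + 1.
have K0 : 0 < K by rewrite /K ltr_wpDl // mulr_ge0 // enorm_ge0.
have d20 : 0 < e / 2 / K by rewrite divr_gt0.
exists (Num.min d1 (e / 2 / K)); first by rewrite lt_min d10 d20.
move=> k u w hi hd hs.
have hs1 : \sum_(i < k) (w i - u i) < d1 by apply: lt_le_trans hs _; rewrite ge_min lexx.
have hs2 : \sum_(i < k) (w i - u i) < e / 2 / K.
  by apply: lt_le_trans hs _; rewrite ge_min lexx orbT.
have := H1 k u w hi hd hs1 => h1.
apply: (@le_lt_trans _ _ (\sum_(i < k) enorm (phi (w i) - phi (u i)) +
   K * \sum_(i < k) (w i - u i))).
  rewrite mulr_sumr -big_split /=; apply: ler_sum => i _.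
  have [ui [uw wb]] := hi i (ltn_ord i).
  have -> : phi (w i) + r (w i) *: v - (phi (u i) + r (u i) *: v) =
    (phi (w i) - phi (u i)) + (r (w i) - r (u i)) *: v.
    by rewrite scalerBl opprD addrACA.
  apply: le_trans (enormD _ _) _; rewrite lerD2l enormZ.
  apply: le_trans (_ : L * (w i - u i) * enorm v <= _).
    by rewrite ler_wpM2r ?enorm_ge0 // Lr.
  rewrite /K mulrDl mul1r mulrAC lerDl subr_ge0 //.
have : K * \sum_(i < k) (w i - u i) < e / 2.
  by rewrite mulrC -ltr_pdivlMr.
move=> h2; apply: lt_le_trans (ltrD h1 h2) _; lra.
Qed.

Lemma inflate_mono (F : V -> set V) (e1 e2 : V -> R) x v :
  0 <= e1 x -> e1 x <= e2 x -> inflate F e1 x v -> inflate F e2 x v.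
Proof.
move=> e10 e12 [f Ff [b bb <-]].
have e20 : 0 < e2 x \/ e2 x = 0.
  by case: (ltgtP (e2 x) 0) => h; [exfalso; lra | left | right].
case: e20 => [e2p|e2z].
  exists f => //; exists ((e1 x / e2 x) *: b).
    rewrite /unit_ball /= enormZ ger0_norm ?divr_ge0 //; last exact: ltW.
    apply: le_trans (_ : e1 x / e2 x * 1 <= 1).
      by rewrite ler_wpM2l // divr_ge0 // ltW.
    by rewrite mulr1 ler_pdivrMr // mul1r.
  by rewrite scalerA mulrCA divff ?mulr1 // gt_eqF.
have -> : e1 x = 0 by apply/eqP; rewrite eq_le e10 andbT -e2z.
by exists f => //; exists b => //; rewrite e2z.
Qed.

End Pert.
Section Aux.
Variables (R : realType) (n : nat).
Notation V := 'rV[R]_n.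
Local Notation mu := (@lebesgue_measure R).

Lemma negl1 (a : R) : mu.-negligible [set a].
Proof.
by exists [set a]; split; [exact: measurable_set1 | exact: lebesgue_measure_set1 | ].
Qed.

Lemma cont_ac (phi : R -> V) a b : abs_cont_on phi a b ->
  forall e : R, 0 < e -> exists2 d : R, 0 < d & forall x y, a <= x -> x <= y -> y <= b ->
    y - x < d -> `|phi y - phi x| < e.
Proof.
move=> ac e e0; have [d d0 H] := ac e e0; exists d => // x y ax xy yb yxd.
have := H 1%N (fun=> x) (fun=> y).
rewrite !big_ord1 => /(_ _ _ yxd) h.
apply: le_lt_trans (norm_le_enorm _) _; apply: h.
  by move=> i _; split => //; split.
by move=> i j; rewrite !ltnS !leqn0 => /eqP -> /eqP ->.
Qed.

Definition clamp (a : R) := if a <= 0 then 0 else if 1 <= a then 1 else a.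

Lemma clampE a : clamp a = if a <= 0 then 0 else if 1 <= a then 1 else a.
Proof. by []. Qed.

Lemma clamp_lip (a b : R) : a <= b -> 0 <= clamp b - clamp a <= b - a.
Proof.
move=> ab; rewrite !clampE.
case: (leP a 0) => ?; case: (leP 1 a) => ?; case: (leP b 0) => ?; case: (leP 1 b) => ?;
  apply/andP; split; lra.
Qed.

Lemma clamp_ge0 a : 0 <= clamp a.
Proof. rewrite clampE; case: (leP a 0) => ?; case: (leP 1 a) => ?; lra. Qed.

Lemma clamp_le1 a : clamp a <= 1.
Proof. rewrite clampE; case: (leP a 0) => ?; case: (leP 1 a) => ?; lra. Qed.

Lemma clamp0 a : a <= 0 -> clamp a = 0.
Proof. by move=> h; rewrite clampE h. Qed.

Lemma clamp1 a : 1 <= a -> clamp a = 1.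
Proof. move=> h; rewrite clampE h; case: (leP a 0) => //; lra. Qed.

Lemma clampid a : 0 <= a -> a <= 1 -> clamp a = a.
Proof.
move=> a0 a1; rewrite clampE; case: (leP a 0) => ?; case: (leP 1 a) => ?; lra.
Qed.

Lemma half_lt (x : R) : 0 < x -> x / 2 < x.
Proof. move=> x0; lra. Qed.

Lemma ltBhelp (h s t0 : R) : h < s - t0 -> t0 < s - h.
Proof. move=> H; lra. Qed.

Lemma psin_help (a b c d e rho : R) : 0 < rho -> a < rho / 2 -> b <= c -> c < 2 * d ->
  d <= rho / 8 -> a + b < rho.
Proof. move=> *; lra. Qed.

End Aux.
Section Main.
Variables (R : realType) (n : nat).
Notation V := 'rV[R]_n.
Local Notation mu := (@lebesgue_measure R).

Lemma main_key (F : V -> set V) (Xo Xu : set V) (eps_o eps : V -> R) (y : V) :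
  sv_continuous F -> (forall x, compact (F x)) -> safe (inflate F eps_o) Xo Xu ->
  continuous eps_o -> pos_cont eps -> (forall x, eps x < eps_o x) ->
  closure Xu y -> closure (Kset F eps Xo) y -> ~ closure Xo y -> False.
Proof.
move=> Fc cF sf ceo [ce epos] elt cXu cK nXo.
have [usc lsc] := Fc y.
pose c := eps_o y - eps y.
have c0 : 0 < c by rewrite subr_gt0.
pose g := c / 5.
have g0 : 0 < g by rewrite divr_gt0.
pose C1 : R := n%:R + 1.
have C10 : 0 < C1 by rewrite /C1 ltr_wpDl.
pose g' := g / C1.
have g'0 : 0 < g' by rewrite divr_gt0.
have [B B0 HB] := bound_near (cF y) usc.
have Hu := usc_unif usc g'0.
have Hl := lsc_unif (cF y) lsc g'0.
have He : \forall x \near y, eps x < eps y + g.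
  have := ce y; move=> /cvgrPdist_lt /(_ g g0).
  by apply: filterS => x h; have := ler_norm (eps x - eps y); rewrite distrC; lra.
have Heo : \forall x \near y, eps_o y - g < eps_o x.
  have := ceo y; move=> /cvgrPdist_lt /(_ g g0).
  by apply: filterS => x h; have := ler_norm (eps_o y - eps_o x); lra.
have [r0 r00 Hr0] : exists2 r0 : R, 0 < r0 & forall x, ball y r0 x -> ~ Xo x.
  apply: contrapT => H; apply: nXo => Bs /nbhs_ballP [e e0 sub].
  apply: contrapT => H2; apply: H; exists e => // x bx Xx; apply: H2.
  by exists x; split => //; exact: sub.
have Hall : \forall x \near y, [/\ (forall f, F x f -> `|f| < B),
   (forall f, F x f -> exists2 g0, F y g0 & `|g0 - f| < g'),
   (forall g0, F y g0 -> exists2 f, F x f & `|g0 - f| < g'),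
   eps x < eps y + g & eps_o y - g < eps_o x].
  near=> x; split.
  - by near: x.
  - by near: x.
  - by near: x.
  - by near: x.
  - by near: x.
move: Hall => /nbhs_ballP [r1 /= r10 Hr1].
pose rho := Num.min r0 r1.
have rho0 : 0 < rho by rewrite lt_min r00 r10.
have rhor0 : rho <= r0 by rewrite ge_min lexx.
have rhor1 : rho <= r1 by rewrite ge_min lexx orbT.
have inball x : `|y - x| < rho -> [/\ (forall f, F x f -> `|f| < B),
   (forall f, F x f -> exists2 g0, F y g0 & `|g0 - f| < g'),
   (forall g0, F y g0 -> exists2 f, F x f & `|g0 - f| < g'),
   eps x < eps y + g & eps_o y - g < eps_o x] /\ ~ Xo x.
  move=> yx; split.
    by apply: Hr1; apply/ballV; apply: lt_le_trans yx _.
  by apply: Hr0; apply/ballV; apply: lt_le_trans yx _.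
have epsy0 : 0 < eps y := epos y.
pose M := B + (eps y + g).
have M0 : 0 < M by rewrite /M; lra.
pose h := rho / (4 * M).
have h0 : 0 < h by rewrite /h divr_gt0 // mulr_gt0.
have hM : 4 * M * h = rho by rewrite /h; field; lra.
pose r := Num.min (rho / 8) (g' * h / 2).
have r0' : 0 < r by rewrite lt_min; apply/andP; split; rewrite divr_gt0 // mulr_gt0.
have rrho : r <= rho / 8 by rewrite ge_min lexx.
have rgh : r <= g' * h / 2 by rewrite ge_min lexx orbT.
have [z [Kz /ballV yz]] := cK _ (nbhsx_ballx y r r0').
have [u [Xuu /ballV yu]] := cXu _ (nbhsx_ballx y r r0').
move: Kz => [t1 t10 [x0 Xx0 [I [phi [s [[[Iint I0 acI [N [negN Nd]]] _] phi0 Is /andP[s0 st] zs]]]]]].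
have Ibet x : 0 <= x -> x <= s -> I x.
  by move=> x0' xs; apply: (Iint 0 s I0 Is); rewrite x0' xs.
have acphi a b : 0 <= a -> a <= b -> b <= s -> abs_cont_on phi a b.
  move=> a0 ab bs; apply: acI => // x; rewrite /= in_itv /= => /andP[ax xb].
  by apply: Ibet; lra.
have dbound t : I t -> ~ N t -> `|y - phi t| < rho ->
    derivable phi t 1 /\ `|'D_1 phi t| <= M.
  move=> It Nt yt; have [dp [f Ff [b bb E]]] := Nd t It Nt.
  split => //; rewrite -E.
  have [[HBt _ _ Het _] _] := inball _ yt.
  have fB := HBt f Ff.
  have b1 : `|b| <= 1 by apply: le_trans (norm_le_enorm b) bb.
  have ep := epos (phi t).
  apply: le_trans (ler_normD _ _) _; rewrite normrZ gtr0_norm //.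
  have : eps (phi t) * `|b| <= eps (phi t) by rewrite -[leRHS]mulr1 ler_wpM2l // ltW.
  rewrite /M; lra.
have yx0 : r0 <= `|y - x0|.
  rewrite leNgt; apply/negP => h1; apply: (Hr0 x0) => //; exact/ballV.
have yzr : `|y - phi s| < r by rewrite -zs.
pose T := [set t | (0 <= t /\ t <= s) /\ rho / 2 <= `|y - phi t|].
have T0 : T 0.
  split; first by split.
  rewrite phi0; apply: le_trans yx0; apply: le_trans rhor0; lra.
have hsT : has_sup T by split; [exists 0 | exists s => t [[_ ?] _]].
pose t0 := sup T.
have t00 : 0 <= t0.
  by have := sup_upper_bound hsT; move=> /(_ 0 T0).
have t0s : t0 <= s by apply: ge_sup; [exists 0 | move=> t [[_ ?] _]].
have after t : t0 < t -> t <= s -> `|y - phi t| < rho / 2.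
  move=> tt ts; rewrite ltNge; apply/negP => h1.
  have Tt : T t by split => //; split => //; lra.
  by have := sup_upper_bound hsT; move=> /(_ t Tt); rewrite -/t0; lra.
have att0 : rho / 2 <= `|y - phi t0|.
  apply/ler_addgt0Pr => e e0.
  have [d d0 Hd] := cont_ac (acphi 0 s (lexx 0) s0 (lexx s)) e0.
  have [t2 [[t20 t2s] Tt2] ht2] := sup_adherent d0 hsT.
  have t2t0 : t2 <= t0 by have := sup_upper_bound hsT; move=> /(_ t2 (conj (conj t20 t2s) Tt2)).
  rewrite -/t0 in ht2.
  have h2 := Hd t2 t0 t20 t2t0 t0s.
  have h3 : `|phi t0 - phi t2| < e by apply: h2; lra.
  have := ler_distD (phi t0) y (phi t2); lra.
have t0lt : t0 < s.
  rewrite lt_neqAle t0s andbT; apply/negP => /eqP e1.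
  by move: att0; rewrite e1; lra.
have lipt0 : `|phi s - phi t0| <= M * (s - t0).
  apply: (lip t0s (ltW M0) (negligibleU negN (negl1 t0)) (acphi t0 s t00 t0s (lexx s))).
  move=> t tt ts nN.
  have tt' : t0 < t.
    rewrite lt_neqAle tt andbT; apply/negP => /eqP e1; apply: nN; right; by rewrite e1.
  apply: dbound.
  - by apply: Ibet; lra.
  - by move=> Nt; apply: nN; left.
  - by have := after t tt' ts; lra.
have st0h : h < s - t0.
  have h1 := ler_distD (phi s) y (phi t0).
  have h2 : rho / 4 < M * (s - t0).
    move: lipt0 h1; set X := M * (s - t0); move=> lipt0 h1; lra.
  have hM4 : M * h = rho / 4 by rewrite -hM; field.
  have : M * h < M * (s - t0) by rewrite hM4.
  by rewrite ltr_pM2l.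
pose v := u - z.
have vsmall : `|v| < 2 * r.
  rewrite /v; apply: le_lt_trans (ler_distD y u z) _; rewrite (distrC u y); lra.
have v0 : 0 <= `|v| := normr_ge0 v.
have sh0 : 0 <= s - h by lra.
pose rr t := clamp ((t - (s - h)) / h).
pose psi t := phi t + rr t *: v.
pose J := [set t | I t /\ t <= s].
have hinv0 : 0 < h^-1 by rewrite invr_gt0.
have rr_lip x1 x2 : x1 <= x2 -> `|rr x2 - rr x1| <= h^-1 * (x2 - x1).
  move=> x12.
  have ab : (x1 - (s - h)) / h <= (x2 - (s - h)) / h by rewrite ler_pM2r // lerD2r.
  have /andP[d0 d1] := clamp_lip ab.
  rewrite /rr ger0_norm //; apply: le_trans d1 _.
  rewrite -mulrBl mulrC; apply: ler_wpM2l; first exact: ltW.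
  lra.
have rr0 t : t <= s - h -> rr t = 0.
  by move=> tsh; rewrite /rr clamp0 // pmulr_lle0 // subr_le0.
have rrmid t : s - h <= t -> t <= s -> rr t = (t - (s - h)) / h.
  move=> tm1 tm2; rewrite /rr clampid //.
    by rewrite mulr_ge0 // ?subr_ge0 // ltW.
  by rewrite ler_pdivrMr // mul1r; lra.
have rrs : rr s = 1.
  rewrite rrmid //; last lra.
  by rewrite (_ : s - (s - h) = h) ?divff ?gt_eqF //; ring.
have psi0 : psi 0 = phi 0 by rewrite /psi rr0 ?scale0r ?addr0 //; lra.
have psis : psi s = u by rewrite /psi rrs scale1r /v zs addrC subrK.
have sol : is_solution (inflate F eps_o) J psi.
  split.
  - move=> a b [Ia as_] [Ib bs] x /andP[ax xb]; split; last lra.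
    by apply: (Iint a b Ia Ib); rewrite ax xb.
  - by split.
  - move=> a b ab sub.
    have subI : `[a, b] `<=` I by move=> x /sub [].
    apply: (@ac_pert R n phi rr v a b h^-1); first exact: ltW.
      exact: acI.
    exact: rr_lip.
  - exists (N `|` [set s - h] `|` [set s]); split.
      by apply: negligibleU; [apply: negligibleU => //; exact: negl1 | exact: negl1].
    move=> t [It ts] nN.
    have nNt : ~ N t by move=> Nt; apply: nN; left; left.
    have tsh : t != s - h by apply/eqP => e1; apply: nN; left; right.
    have tns : t < s by rewrite lt_neqAle ts andbT; apply/eqP => e1; apply: nN; right.
    have [dp Hinf] := Nd t It nNt.
    case: (ltP t (s - h)) => ht.
      have near0 : \forall t' \near t, rr t' = 0 * t' + 0.
        have sht : 0 < s - h - t by rewrite subr_gt0.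
        apply/nbhs_ballP; exists (s - h - t) => //.
        move=> t' bt; rewrite mul0r addr0 rr0 //.
        move: bt; rewrite /ball /= => bt.
        have := ler_norm (t' - t); rewrite distrC; lra.
      have [dps Dps] := deriv_pert v dp near0.
      split => //; rewrite Dps scale0r addr0 /psi rr0 ?scale0r ?addr0; last exact: ltW.
      apply: inflate_mono Hinf; [exact: ltW (epos _) | exact: ltW (elt _)].
    have ht' : s - h < t by rewrite lt_neqAle ht andbT eq_sym.
    have nearm : \forall t' \near t, rr t' = h^-1 * t' + (- (s - h) / h).
      have mpos : 0 < Num.min (t - (s - h)) (s - t) by rewrite lt_min !subr_gt0 ht' tns.
      apply/nbhs_ballP; exists (Num.min (t - (s - h)) (s - t)) => //.
      move=> t' bt; move: bt; rewrite /ball /= lt_min => /andP[b1 b2].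
      have := ler_norm (t' - t); rewrite distrC => b3.
      have b4 := ler_norm (t - t').
      rewrite rrmid; [by rewrite mulrDl (mulrC t') | lra | lra].
    have [dps Dps] := deriv_pert v dp nearm.
    split => //; rewrite Dps.
    have tt0 : t0 < t by apply: lt_trans (ltBhelp st0h) ht'.
    have pin := after t tt0 (ltW tns).
    move: Hinf => [f Ff [b bb E]].
    have pin' : `|y - phi t| < rho by apply: lt_trans pin (half_lt rho0).
    have [[_ Hut _ Het _] _] := inball (phi t) pin'.
    have [gy Fgy dg] := Hut f Ff.
    have rrt0 : 0 <= rr t by exact: clamp_ge0.
    have rrt1 : rr t <= 1 by exact: clamp_le1.
    have psin : `|y - psi t| < rho.
      rewrite /psi; apply: le_lt_trans (ler_distD (phi t) y _) _.
      have -> : phi t - (phi t + rr t *: v) = - (rr t *: v).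
        by rewrite opprD addrA subrr add0r.
      rewrite normrN normrZ ger0_norm //.
      have hh : rr t * `|v| <= `|v| by rewrite -[leRHS]mul1r ler_wpM2r.
      exact: (psin_help 0 rho0 pin hh vsmall rrho).
    have [[_ _ Hlp _ Heop] _] := inball (psi t) psin.
    have [f' Ff' df'] := Hlp gy Fgy.
    pose w := (f - f') + eps (phi t) *: b + h^-1 *: v.
    have Dw : 'D_1 phi t + h^-1 *: v = f' + w.
      rewrite -E /w !addrA; congr (_ + _ + _).
      by rewrite (addrC f' f) addrK.
    have ffg : `|f - f'| < 2 * g'.
      apply: le_lt_trans (ler_distD gy f f') _; rewrite (distrC f gy); clear -dg df'; lra.
    have Cg : C1 * g' = g by rewrite /g'; field; rewrite gt_eqF.
    have nC : (n%:R : R) <= C1 by rewrite /C1 lerDl.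
    have e1 : enorm (f - f') <= 2 * g.
      apply: le_trans (enorm_le_norm _) _.
      apply: le_trans (_ : C1 * `|f - f'| <= _).
        by rewrite ler_wpM2r.
      rewrite -Cg; have hf := ltW ffg; clear -hf C10.
      by rewrite mulrCA ler_wpM2l // ltW.
    have ep := epos (phi t).
    have e2 : enorm (eps (phi t) *: b) <= eps (phi t).
      by rewrite enormZ gtr0_norm // -[leRHS]mulr1 ler_wpM2l // ltW.
    have e3 : enorm (h^-1 *: v) < g.
      rewrite enormZ gtr0_norm //.
      have ev : enorm v <= C1 * `|v|.
        by apply: le_trans (enorm_le_norm _) _; rewrite ler_wpM2r.
      have : C1 * `|v| < C1 * (g' * h) by rewrite ltr_pM2l //; clear -vsmall rgh; lra.
      move=> h1; have h2 : enorm v < C1 * (g' * h) by clear -h1 ev; lra.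
      have : h^-1 * enorm v < h^-1 * (C1 * (g' * h)) by rewrite ltr_pM2l.
      have -> : h^-1 * (C1 * (g' * h)) = g by rewrite -Cg; field; rewrite gt_eqF.
      done.
    have enw : enorm w < eps_o (psi t).
      apply: le_lt_trans (enormD _ _) _.
      apply: le_lt_trans (lerD (enormD _ _) (lexx _)) _.
      have g5 : 5 * g = eps_o y - eps y by rewrite /g /c; field.
      clear -g5 e1 e2 e3 Het Heop; lra.
    have eo0 : 0 < eps_o (psi t) by apply: lt_trans (elt _); exact: epos.
    exists f' => //; exists ((eps_o (psi t))^-1 *: w).
      rewrite /unit_ball /= enormZ ger0_norm; last by rewrite invr_ge0 ltW.
      by rewrite mulrC ler_pdivrMr // mul1r; exact: ltW.
    by rewrite scalerA divff ?scale1r ?gt_eqF // Dw.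
apply: (sf J psi sol _ s _ s0); [by rewrite psi0 phi0 | by split | by rewrite psis].
Unshelve. all: by end_near.
Qed.

End Main.

Unset Implicit Arguments.

Theorem lemma9 (R : realType) (n : nat) (F : 'rV[R]_n -> set 'rV[R]_n)
  (Xo Xu : set 'rV[R]_n) (eps_o : 'rV[R]_n -> R) :
  sv_continuous F ->
  (forall x, F x !=set0 /\ compact (F x) /\ convex_set (F x)) ->
  forward_complete F ->
  margin F Xo Xu eps_o ->
  forall eps : 'rV[R]_n -> R, pos_cont eps -> (forall x, eps x < eps_o x) ->
    (closure Xo `&` closure Xu = set0 ->
       closure Xu `&` closure (Kset F eps Xo) = set0) /\
    (closure Xo `&` Xu = set0 ->
       Xu `&` closure (Kset F eps Xo) = set0).
Proof.
move=> Fc Fp _ [[ceo _] sfo] eps pe elt.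
have cF x : compact (F x) by have [_ [? _]] := Fp x.
split.
- move=> H; apply/seteqP; split => // y [cXu cK].
  apply: (main_key Fc cF sfo ceo pe elt cXu cK) => cXo.
  have : (closure Xo `&` closure Xu) y by split.
  by rewrite H.
- move=> H; apply/seteqP; split => // y [Xuy cK].
  apply: (main_key Fc cF sfo ceo pe elt (subset_closure Xuy) cK) => cXo.
  have : (closure Xo `&` Xu) y by split.
  by rewrite H.
Qed.
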